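(* Let $G=(V,E,s_0,s_1)$ be a switch graph and $o,d\in V$ with $o\neq d$, such that $\textsc{Run}(G,o,d)$ terminates. Let $\mathbf{x}(G,o,d):E\to\mathbb{N}_0$ (the run profile) assign to each edge the number of times it is traversed during $\textsc{Run}(G,o,d)$. Then $\mathbf{x}(G,o,d)$ is a switching flow.
   Context: A switch graph is a 4-tuple $G=(V,E,s_0,s_1)$ where $V$ is a finite vertex set, $s_0,s_1:V\to V$, and $E=\{(v,s_0(v)):v\in V\}\cup\{(v,s_1(v)):v\in V\}$ (loops allowed; possibly $s_0(v)=s_1(v)$). The procedure $\textsc{Run}(G,o,d)$: maintain arrays $\mathtt{s\_curr},\mathtt{s\_next}$ indexed by $V$, initially $\mathtt{s\_curr}[v]=s_0(v)$, $\mathtt{s\_next}[v]=s_1(v)$; set $v:=o$; while $v\neq d$: $w:=\mathtt{s\_curr}[v]$, swap $\mathtt{s\_curr}[v],\mathtt{s\_next}[v]$, $v:=w$ (traversing edge $(v,w)$). For $v\in V$, $E^+(v)$ and $E^-(v)$ denote the outgoing and incoming edges of $v$. A switching flow is a function $\mathbf{x}:E\to\mathbb{N}_0$, $e\mapsto x_e$, such that for all $v\in V$: (a) $\sum_{e\in E^+(v)}x_e-\sum_{e\in E^-(v)}x_e$ equals $1$ if $v=o$, $-1$ if $v=d$, and $0$ otherwise; and (b) $0\le x_{(v,s_1(v))}\le x_{(v,s_0(v))}\le x_{(v,s_1(v))}+1$. *)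

(* Defs.v *)
From mathcomp Require Import all_boot all_order all_algebra.
Set Implicit Arguments. Unset Strict Implicit. Unset Printing Implicit Defensive.
Import GRing.Theory Num.Theory.

Section SwitchGraph.
Variable V : finType.
Variables (s0 s1 : V -> V).

Definition edges : {set V * V} :=
  [set e : V * V | (e.2 == s0 e.1) || (e.2 == s1 e.1)].

Record run_state := RunState {
  rs_pos : V;
  rs_curr : V -> V;
  rs_next : V -> V }.

Definition run_init (o : V) : run_state := RunState o s0 s1.

Definition run_step (st : run_state) : run_state :=
  let v := rs_pos st in
  let w := rs_curr st v in
  RunState w
    (fun u => if u == v then rs_next st v else rs_curr st u)
    (fun u => if u == v then rs_curr st v else rs_next st u).

Definition run_traj (o : V) (k : nat) : run_state := iter k run_step (run_init o).

Definition run_terminates_in (o d : V) (n : nat) : Prop :=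
  rs_pos (run_traj o n) = d /\ forall k, k < n -> rs_pos (run_traj o k) <> d.

Definition traversed_edge (o : V) (k : nat) : V * V :=
  (rs_pos (run_traj o k), rs_pos (run_traj o k.+1)).

Definition run_profile (o : V) (n : nat) (e : V * V) : nat :=
  \sum_(k < n) (traversed_edge o k == e).

(* Switching flow (values of x outside E are irrelevant). *)
Definition switching_flow (o d : V) (x : V * V -> nat) : Prop :=
  (forall v : V,
     ((\sum_(e in edges | e.1 == v) x e)%:Z - (\sum_(e in edges | e.2 == v) x e)%:Z
      = (if v == o then 1 else if v == d then -1 else 0))%R) /\
  (forall v : V, x (v, s1 v) <= x (v, s0 v) <= x (v, s1 v) + 1).

End SwitchGraph.

(* Main.v *)
Require Import Defs.
From mathcomp Require Import all_boot all_order all_algebra.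
From mathcomp Require Import zify.

Section Proofs.
Variable V : finType.
Variables (s0 s1 : V -> V).
Variable o : V.

Local Notation st k := (run_traj s0 s1 o k).
Local Notation pos k := (rs_pos (run_traj s0 s1 o k)).

Lemma traj_S k : st k.+1 = run_step (st k).
Proof. by []. Qed.

Lemma arr_inv k u :
  (rs_curr (st k) u = s0 u /\ rs_next (st k) u = s1 u) \/
  (rs_curr (st k) u = s1 u /\ rs_next (st k) u = s0 u).
Proof.
elim: k => [|k IH]; first by left.
rewrite /run_traj iterS -/(run_traj s0 s1 o k) /run_step /=.
case: eqP => [<-|_] //.
by case: (IH) => [[H1 H2]|[H1 H2]]; rewrite -/(run_traj s0 s1 o k) ?H1 ?H2; [right|left].
Qed.

Lemma te_in k : traversed_edge s0 s1 o k \in edges s0 s1.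
Proof.
rewrite /traversed_edge inE /=.
by case: (arr_inv k (pos k)) => [[-> _]|[-> _]]; rewrite eqxx ?orbT.
Qed.

Lemma out_sum n v :
  \sum_(e in edges s0 s1 | e.1 == v) run_profile s0 s1 o n e
  = \sum_(k < n) (pos k == v).
Proof.
rewrite /run_profile exchange_big /=; apply: eq_bigr => k _.
have Hin := te_in k.
case: (boolP ((traversed_edge s0 s1 o k).1 == v)) => H.
  rewrite (bigD1 (traversed_edge s0 s1 o k)) /=; last by rewrite Hin H.
  rewrite eqxx big1 ?addn0 //.
  by move=> e /andP[_ ne]; rewrite eq_sym (negbTE ne).
rewrite big1 //.
move=> e /andP[_ He]; case: eqP => // Heq; rewrite -Heq in He; by rewrite He in H.
Qed.

Lemma in_sum n v :
  \sum_(e in edges s0 s1 | e.2 == v) run_profile s0 s1 o n e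
  = \sum_(k < n) (pos k.+1 == v).
Proof.
rewrite /run_profile exchange_big /=; apply: eq_bigr => k _.
have Hin := te_in k.
case: (boolP ((traversed_edge s0 s1 o k).2 == v)) => H.
  rewrite (bigD1 (traversed_edge s0 s1 o k)) /=; last by rewrite Hin H.
  rewrite eqxx big1 ?addn0 //.
  by move=> e /andP[_ ne]; rewrite eq_sym (negbTE ne).
rewrite big1 //.
move=> e /andP[_ He]; case: eqP => // Heq; rewrite -Heq in He; by rewrite He in H.
Qed.

Lemma tele m v :
  \sum_(k < m) (pos k == v) + (pos m == v) = (pos 0 == v) + \sum_(k < m) (pos k.+1 == v).
Proof.
elim: m => [|m IH]; first by rewrite !big_ord0 addn0.
rewrite !big_ord_recr /=; move: IH => /=; lia.
Qed.

Lemma prof_S k e : run_profile s0 s1 o k.+1 e = run_profile s0 s1 o k e + (traversed_edge s0 s1 o k == e).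
Proof. by rewrite /run_profile big_ord_recr. Qed.

Lemma count_inv v (ne : s0 v != s1 v) k :
  (rs_curr (st k) v = s0 v /\ rs_next (st k) v = s1 v /\
     run_profile s0 s1 o k (v, s0 v) = run_profile s0 s1 o k (v, s1 v)) \/
  (rs_curr (st k) v = s1 v /\ rs_next (st k) v = s0 v /\
     run_profile s0 s1 o k (v, s0 v) = run_profile s0 s1 o k (v, s1 v) + 1).
Proof.
elim: k => [|k IH]; first by left; rewrite /run_profile !big_ord0.
rewrite !prof_S /traversed_edge traj_S /run_step /=.
case: (eqVneq (pos k) v) => [Hp|Hp].
  subst v; rewrite !xpair_eqE !eqxx /=.
  case: IH => [[Hc [Hn HA]]|[Hc [Hn HA]]]; rewrite Hc Hn ?eqxx.
    right; rewrite (negbTE ne); split=> //; split=> //; lia.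
  left; rewrite eq_sym (negbTE ne); split=> //; split=> //; lia.
by rewrite !xpair_eqE (negbTE Hp) /= !addn0.
Qed.

End Proofs.

Theorem mainTheorem2 (V : finType) (s0 s1 : V -> V) (o d : V) (n : nat) :
  o <> d ->
  run_terminates_in s0 s1 o d n ->
  switching_flow s0 s1 o d (run_profile s0 s1 o n).
Proof.
move=> hod [hn _]; split.
  move=> v; rewrite out_sum in_sum.
  have := @tele _ s0 s1 o n v; rewrite hn /=.
  have hdo : (d == o) = false by apply/eqP => E; apply: hod.
  case: (eqVneq v o) => [->|hvo]; first by rewrite hdo; lia.
  case: (eqVneq v d) => [->|hvd]; first by rewrite ?eqxx; lia.
  lia.
move=> v; case: (eqVneq (s0 v) (s1 v)) => [E|ne].
  by rewrite E leqnn leq_addr.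
by case: (@count_inv _ s0 s1 o v ne n) => [[_ [_ ->]]|[_ [_ ->]]]; rewrite ?leqnn ?leq_addr ?leq_addl ?leqnSn.
Qed.
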